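(* Let $R=\mathbb{R}[t_1,\dots,t_n]$, let $k\ge 0$, and let $R_{\le k}\subset R$ be the $\mathbb{R}$-vector space of polynomials of total degree $\le k$. For every $\mathbb{R}$-linear map $A:R_{\le k}\to R$ there exists a differential operator $D\in\mathrm{Diff}^k(R)$ whose restriction $D|_{R_{\le k}}:R_{\le k}\to R$ equals $A$.
   Context: For a commutative algebra $R$ over a field $\Bbbk$, for $a\in R$ let $m_a:R\to R$, $b\mapsto ab$. The differential operators of order $0$ are the $R$-module endomorphisms of $R$, i.e. $\mathrm{Diff}^0(R)=\{m_a: a\in R\}$. Inductively, for $i\ge 1$, a $\Bbbk$-linear map $D:R\to R$ is a differential operator of order $i$, written $D\in\mathrm{Diff}^i(R)$, if for every $D^0\in \mathrm{Diff}^0(R)$ the commutator $[D,D^0]=D\circ D^0-D^0\circ D$ lies in $\mathrm{Diff}^{i-1}(R)$. Here $R=\mathbb{R}[t_1,\dots,t_n]$ is regarded as an $\mathbb{R}$-algebra. *)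

(* Defs.v *)
From HB Require Import structures.
From mathcomp Require Import all_boot all_algebra.
From mathcomp Require Import reals.
From mathcomp Require Import mpoly.
Set Implicit Arguments. Unset Strict Implicit. Unset Printing Implicit Defensive.
Import GRing.Theory.
Local Open Scope ring_scope.

Fixpoint isDiffOp (K : fieldType) (n : nat) (i : nat)
    (D : {mpoly K[n]} -> {mpoly K[n]}) : Prop :=
  match i with
  | 0 => exists a : {mpoly K[n]}, forall p, D p = a * p
  | i'.+1 =>
      (forall (c : K) (p q : {mpoly K[n]}), D (c *: p + q) = c *: D p + D q) /\
      forall a : {mpoly K[n]}, isDiffOp i' (fun p => D (a * p) - a * D p)
  end.

(* Main.v *)
Require Import Defs.
From HB Require Import structures.
From mathcomp Require Import all_boot all_algebra.
From mathcomp Require Import reals.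
From mathcomp Require Import mpoly.
Local Open Scope ring_scope.
Import GRing.Theory Num.Theory.
Set Implicit Arguments. Unset Strict Implicit. Unset Printing Implicit Defensive.

Section Gen.
Variable (K : fieldType) (n : nat).
Implicit Types D : {mpoly K[n]} -> {mpoly K[n]}.

Lemma diff_lin j D : isDiffOp j D ->
  forall c p q, D (c *: p + q) = c *: D p + D q.
Proof.
case: j => [|j] /=; last by case.
by case=> a Ha c p q; rewrite !Ha mulrDr scalerAr.
Qed.

Lemma diff_ext j D D' : D =1 D' -> isDiffOp j D -> isDiffOp j D'.
Proof.
elim: j D D' => [|j IH] D D' E /=.
  by case=> a Ha; exists a => p; rewrite -E.
case=> Hl Hc; split; first by move=> c p q; rewrite -!E.
by move=> a; apply: (IH _ _ _ (Hc a)) => p /=; rewrite !E.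
Qed.

Lemma diff_mono j D : isDiffOp j D -> isDiffOp j.+1 D.
Proof.
elim: j D => [|j IH] D /=.
  move=> H; split; first exact: (@diff_lin 0 D H).
  by case: H => a Ha b; exists 0 => p; rewrite !Ha mul0r mulrCA subrr.
by case=> Hl Hc; split=> // a; exact: IH.
Qed.

Lemma diff_add j D1 D2 : isDiffOp j D1 -> isDiffOp j D2 ->
  isDiffOp j (fun p => D1 p + D2 p).
Proof.
elim: j D1 D2 => [|j IH] D1 D2 /=.
  by case=> a Ha [b Hb]; exists (a + b) => p; rewrite Ha Hb mulrDl.
case=> H1 C1 [H2 C2]; split.
  by move=> c p q; rewrite H1 H2 scalerDr addrACA.
move=> a; apply: diff_ext (IH _ _ (C1 a) (C2 a)) => p /=.
by rewrite mulrDr opprD addrACA.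
Qed.

Lemma diff_mull j D b : isDiffOp j D -> isDiffOp j (fun p => b * D p).
Proof.
elim: j D => [|j IH] D /=.
  by case=> a Ha; exists (b * a) => p; rewrite Ha mulrA.
case=> Hl Hc; split.
  by move=> c p q; rewrite Hl mulrDr scalerAr.
move=> a; apply: diff_ext (IH _ (Hc a)) => p /=.
by rewrite mulrBr mulrCA.
Qed.

Lemma diff_zero j : isDiffOp j (fun _ : {mpoly K[n]} => 0).
Proof.
elim: j => [|j IH] /=; first by exists 0 => p; rewrite mul0r.
split; first by move=> c p q; rewrite scaler0 addr0.
by move=> a; apply: diff_ext IH => p /=; rewrite mulr0 subr0.
Qed.

Lemma diff_deriv j D i : isDiffOp j D ->
  isDiffOp j.+1 (fun p => mderiv i (D p)).
Proof.
elim: j D => [|j IH] D /=.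
  case=> c Hc; split.
    by move=> x p q; rewrite !Hc mulrDr -scalerAr mderivD mderivZ.
  move=> a; exists (mderiv i a * c) => p.
  by rewrite !Hc mulrCA (mderivM i a) addrK mulrA.
case=> Hl Hc; split.
  by move=> c p q; rewrite Hl mderivD mderivZ.
move=> a.
have H1 := IH _ (Hc a).
have H2 : isDiffOp j.+1 (fun p => mderiv i a * D p).
  by apply: diff_mull; split.
apply: diff_ext (diff_add H1 H2) => p /=.
rewrite mderivB mderivM opprD addrA.
by rewrite addrAC addrNK.
Qed.

Lemma diff_foldr (s : seq 'I_n) :
  isDiffOp (size s) (fun p => foldr (@mderiv n K) p s).
Proof.
elim: s => [|i s IH] /=; first by exists 1 => p; rewrite mul1r.
exact: diff_deriv.
Qed.

Lemma diff_mderivm m : isDiffOp (mdeg m) (@mderivm n K m).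
Proof.
have E := @mderivm_foldr n K m; move: E => /=.
set s := flatten _ => E.
have -> : mdeg m = size s.
  rewrite /s size_flatten /shape -map_comp sumnE big_map mdegE.
  by rewrite /index_enum /= -enumT; apply: eq_bigr => i _ /=; rewrite size_nseq.
by apply: diff_ext (diff_foldr s) => p; rewrite E.
Qed.

Lemma diff_sum j (T : Type) (r : seq T) (P : pred T) (F : T -> {mpoly K[n]} -> {mpoly K[n]}) :
  (forall x, P x -> isDiffOp j (F x)) ->
  isDiffOp j (fun p => \sum_(x <- r | P x) F x p).
Proof.
move=> HF; elim: r => [|x r IH].
  by apply: diff_ext (diff_zero j) => p; rewrite big_nil.
case Px: (P x).
  apply: diff_ext (diff_add (HF x Px) IH) => p.
  by rewrite big_cons Px.
by apply: diff_ext IH => p; rewrite big_cons Px.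
Qed.

End Gen.

Section Main.
Variable (R : realType) (n : nat).
Implicit Types F G A D : {mpoly R[n]} -> {mpoly R[n]}.

Definition linS N F := forall (c : R) (p q : {mpoly R[n]}),
  (msize p <= N)%N -> (msize q <= N)%N -> F (c *: p + q) = c *: F p + F q.

Lemma lin0 N F : linS N F -> F 0 = 0.
Proof.
move=> H; have := H 1 0 0; rewrite !msize0 => /(_ isT isT).
rewrite scale1r addr0 scale1r => h.
have := congr1 (fun x => x - F 0) h; rewrite /= subrr addrK.
by move/esym.
Qed.

Lemma sum_claim N F G : linS N F -> linS N G ->
  (forall m, (mdeg m < N)%N -> F 'X_[m] = G 'X_[m]) ->
  forall (r : seq 'X_{1..n}) (c : 'X_{1..n} -> R),
  all (fun m => (mdeg m < N)%N) r ->
  (msize (\sum_(m <- r) c m *: 'X_[m]) <= N)%N /\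
  F (\sum_(m <- r) c m *: 'X_[m]) = G (\sum_(m <- r) c m *: 'X_[m]).
Proof.
move=> HF HG E; elim=> [|x r IH] c /=.
  by rewrite !big_nil msize0 (lin0 HF) (lin0 HG).
case/andP=> hx hr; case: (IH c hr) => hs he.
have hX : (msize ('X_[x] : {mpoly R[n]}) <= N)%N by rewrite msizeX.
rewrite big_cons; split.
  apply: leq_trans (msizeD_le _ _) _.
  by rewrite geq_max hs andbT (leq_trans (msizeZ_le _ _)).
by rewrite HF // HG // E // he.
Qed.

Lemma agree N F G : linS N F -> linS N G ->
  (forall m, (mdeg m < N)%N -> F 'X_[m] = G 'X_[m]) ->
  forall p, (msize p <= N)%N -> F p = G p.
Proof.
move=> HF HG E p hp.
have := sum_claim HF HG E (fun m => p@_m) (r := msupp p).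
rewrite -mpolyE; case=> //.
by apply/allP => m hm; apply: leq_trans (msize_mdeg_lt hm) hp.
Qed.

Lemma prod_zero (m m' : 'X_{1..n}) : (mdeg m <= mdeg m')%N -> m' != m ->
  (\prod_(i < n) (m i)^_(m' i))%N = 0%N.
Proof.
move=> hd hne.
case: (boolP [exists i, (m i < m' i)%N]) => [/existsP [i hi]|].
  by rewrite (bigD1 i) //= ffact_small.
rewrite negb_exists => /forallP hle; exfalso.
have : [exists j, m' j != m j].
  apply: contraR hne; rewrite negb_exists => /forallP h.
  by apply/eqP/mnmP => j; apply/eqP/negPn/(h j).
case/existsP => j hj.
have hlt : (m' j < m j)%N by rewrite ltn_neqAle hj leqNgt (hle j).
have : (mdeg m' < mdeg m)%N.
  rewrite !mdegE (bigD1 j) //= [X in (_ < X)%N](bigD1 j) //=.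
  rewrite -addSn leq_add //; apply: leq_sum => i _.
  by rewrite leqNgt (hle i).
by rewrite ltnNge hd.
Qed.

Lemma fact_neq0 (m : 'X_{1..n}) :
  (((\prod_(i < n) (m i)^_(m i))%N)%:R : R) != 0.
Proof.
rewrite pnatr_eq0 -lt0n prodn_gt0 // => i.
by rewrite ffactnn fact_gt0.
Qed.

Lemma step k A D' : linS k.+1 A -> isDiffOp k D' ->
  (forall p, (msize p <= k)%N -> D' p = A p) ->
  exists D, isDiffOp k D /\ forall p, (msize p <= k.+1)%N -> D p = A p.
Proof.
move=> HA HD' HE.
pose f (m : 'X_{1..n}) := (((\prod_(i < n) (m i)^_(m i))%N)%:R : R).
pose D p := D' p + \sum_(m : 'X_{1..n < k.+1} | mdeg m == k)
   ((f m)^-1 *: (A 'X_[m] - D' 'X_[m])) * mderivm m p.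
have HD : isDiffOp k D.
  apply: diff_add => //; apply: diff_sum => m /eqP hm.
  apply: diff_mull; rewrite -{1}hm; exact: diff_mderivm.
exists D; split => //.
apply: agree => //.
  by move=> c p q _ _; apply: (diff_lin HD).
move=> m hm; rewrite /D.
case: (eqVneq (mdeg m) k) => hmk.
  rewrite (bigD1 (BMultinom hm)) /=; last by rewrite hmk.
  rewrite big1 ?addr0; last first.
    move=> m' /andP [/eqP hm' hne]; rewrite mderivmX prod_zero ?scale0r ?mulr0 //.
      by rewrite hm' hmk.
  rewrite mderivmX.
  have -> : (m - m)%MM = 0%MM by apply/mnmP => i; rewrite mnmBE subnn mnm0E.
  rewrite mpolyX0 -scalerAr mulr1 scalerA mulfV ?fact_neq0 // scale1r.
  by rewrite addrC subrK.
rewrite big1 ?addr0; last first.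
  move=> m' /eqP hm'; rewrite mderivmX prod_zero ?scale0r ?mulr0 //.
    by rewrite hm' -ltnS.
  by apply: contra_neq hmk => e; rewrite -hm' e.
apply: HE; rewrite msizeX.
by move: hm; rewrite ltnS leq_eqVlt (negbTE hmk).
Qed.

Lemma main_gen k A : linS k.+1 A ->
  exists D, isDiffOp k D /\ forall p, (msize p <= k.+1)%N -> D p = A p.
Proof.
elim: k A => [|k IH] A HA.
  apply: (step HA (diff_zero _ _ 0)) => p hp.
  have -> : p = 0 by apply/eqP; rewrite -msize_poly_eq0 -leqn0.
  by rewrite (lin0 HA).
have HA' : linS k.+1 A by move=> c p q hp hq; apply: HA; apply: leqW.
case: (IH A HA') => D' [HD' HE].
exact: (step HA (diff_mono HD') HE).
Qed.

End Main.

Theorem mainTheorem2 (R : realType) (n k : nat)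
    (A : {mpoly R[n]} -> {mpoly R[n]})
    (A_lin : forall (c : R) (p q : {mpoly R[n]}),
        (msize p <= k.+1)%N -> (msize q <= k.+1)%N ->
        A (c *: p + q) = c *: A p + A q) :
  exists D : {mpoly R[n]} -> {mpoly R[n]},
    isDiffOp k D /\ forall p : {mpoly R[n]}, (msize p <= k.+1)%N -> D p = A p.
Proof. exact: main_gen. Qed.
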